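(* Let $a\ge b\ge1$ be integers with either $b\ge2$, or $b=1$ and $a\ge5$, and define $c_j,d_j$ ($j\in\mathbb Z_+$) by $c_0=d_0=0$, $c_1=d_1=1$, $c_{k+2}+c_k=a d_{k+1}$, $d_{k+2}+d_k=b c_{k+1}$. Then for all $k\in\mathbb Z_+$: $$bc_k^2+ad_{k+1}^2-abc_kd_{k+1}-abc_k+2ad_{k+1}+a>0,$$ $$bc_{k+1}^2+ad_k^2-abc_{k+1}d_k+2bc_{k+1}-abd_k+b>0.$$
   Context: $\mathbb Z_+=\{0,1,2,\dots\}$. *)

(* Defs.v *)
From Stdlib Require Import ZArith.

(* Main.v *)
Require Import Defs.
From Stdlib Require Import ZArith Lia Psatz.
Open Scope Z_scope.

Definition BB (a b x y : Z) := b * x ^ 2 - a * b * x * y + a * y ^ 2.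

Lemma inv_step (a b : Z) (c d : nat -> Z) :
  a >= b -> b >= 1 -> a * b >= 4 ->
  c 0%nat = 0 -> d 0%nat = 0 -> c 1%nat = 1 -> d 1%nat = 1 ->
  (forall k : nat, c (k + 2)%nat + c k = a * d (k + 1)%nat) ->
  (forall k : nat, d (k + 2)%nat + d k = b * c (k + 1)%nat) ->
  forall k : nat,
    0 <= c k /\ 0 <= d k /\ 0 <= c (k+1)%nat /\ 0 <= d (k+1)%nat /\
    2 * d (k+1)%nat > b * c k /\ 2 * c (k+1)%nat > a * d k /\
    BB a b (c k) (d (k+1)%nat) > 0 /\ BB a b (c (k+1)%nat) (d k) > 0.
Proof.
  intros Hab Hb Hab4 c0 d0 c1 d1 Hc Hd k.
  induction k as [|k IH].
  - simpl. rewrite c0, d0, c1, d1. unfold BB. lia.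
  - destruct IH as (H1 & H2 & H3 & H4 & H5 & H6 & H7 & H8).
    replace (S k + 1)%nat with (k + 2)%nat by lia.
    replace (S k) with (k + 1)%nat by lia.
    pose proof (Hc k) as E1. pose proof (Hd k) as E2.
    assert (Ec : c (k+2)%nat = a * d (k+1)%nat - c k) by lia.
    assert (Ed : d (k+2)%nat = b * c (k+1)%nat - d k) by lia.
    rewrite Ec, Ed.
    assert (T1 : a * d (k+1)%nat > 2 * c k) by nia.
    assert (T2 : b * c (k+1)%nat > 2 * d k) by nia.
    unfold BB in *.
    repeat split; try nia.
Qed.

Theorem lemma4p2 (a b : Z) (c d : nat -> Z) :
  a >= b -> b >= 1 -> (b >= 2 \/ (b = 1 /\ a >= 5)) ->
  c 0%nat = 0 -> d 0%nat = 0 -> c 1%nat = 1 -> d 1%nat = 1 ->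
  (forall k : nat, c (k + 2)%nat + c k = a * d (k + 1)%nat) ->
  (forall k : nat, d (k + 2)%nat + d k = b * c (k + 1)%nat) ->
  forall k : nat,
    b * c k ^ 2 + a * d (k + 1)%nat ^ 2
      - a * b * c k * d (k + 1)%nat - a * b * c k
      + 2 * a * d (k + 1)%nat + a > 0 /\
    b * c (k + 1)%nat ^ 2 + a * d k ^ 2
      - a * b * c (k + 1)%nat * d k + 2 * b * c (k + 1)%nat
      - a * b * d k + b > 0.
Proof.
  intros Hab Hb Hor c0 d0 c1 d1 Hc Hd k.
  assert (Hab4 : a * b >= 4) by (destruct Hor; nia).
  destruct (inv_step a b c d Hab Hb Hab4 c0 d0 c1 d1 Hc Hd k)
    as (H1 & H2 & H3 & H4 & H5 & H6 & H7 & H8).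
  unfold BB in *.
  split.
  - assert (P : a * (2 * d (k+1)%nat - b * c k + 1) > 0) by nia. nia.
  - assert (P : b * (2 * c (k+1)%nat - a * d k + 1) > 0) by nia. nia.
Qed.
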